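(* There is a constant $c>1$ such that for all $t\in[0,1]$, on $C_0\setminus\mathrm{Sing}(C_0)$, $$\tfrac1c\,\omega_{FS}|_{C_0}\le(\mathcal{F}_t^*\omega_{FS})|_{C_0}\le c\,\omega_{FS}|_{C_0}.$$ In particular $\omega_{FS}$ restricts to a symplectic form on $C_t\setminus\mathrm{Sing}(C_t)$ for every $t\in[0,1]$.
   Context: On $\mathbb{CP}^2$ with homogeneous coordinates $[z_0,z_1,z_2]$, use affine coordinates $x_k=z_k/z_0=r_ke^{i\theta_k}$ ($k=1,2$); $\omega_{FS}=i\partial\bar\partial\log(1+|x_1|^2+|x_2|^2)$ is the Fubini–Study Kähler form. $C_0$ is the line $\{z_0+z_1+z_2=0\}$ (in affine coordinates $x_1+x_2+1=0$). For $t\in[0,1]$, $\mathcal{F}_t(x_1,x_2)=\Big(\big(\tfrac{\max(1,r_2)}{\max(r_1,r_2)}\big)^tx_1,\big(\tfrac{\max(1,r_1)}{\max(r_1,r_2)}\big)^tx_2\Big)$ (extended continuously to $\mathbb{CP}^2$), $C_t=\mathcal{F}_t(C_0)$, and $\mathrm{Sing}(C_t)=\{x\in C_t:(r_1-1)(r_2-1)(r_1-r_2)=0\}$; $\mathcal{F}_t$ is smooth on $C_0\setminus\mathrm{Sing}(C_0)$. *)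

(* Defs.v *)
From Stdlib Require Import Reals.
From Coquelicot Require Import Coquelicot.
Open Scope R_scope.

(* A point of the affine chart {z0 <> 0} of CP^2: (x1, x2) in C^2.
   A (real) tangent vector at such a point is also an element of C^2. *)
Definition pt := (C * C)%type.

(* Fubini-Study form  omega_FS = i d dbar log(1+|x1|^2+|x2|^2)
   = i sum_{j,k} h_{j kbar} dx_j /\ dxbar_k,
   h_{j kbar} = (N delta_jk - xbar_j x_k) / N^2,  N = 1+|x1|^2+|x2|^2,
   evaluated on real tangent vectors X, Y (with (a/\b)(X,Y) = a(X)b(Y)-a(Y)b(X)):
   omega(X,Y) = i (A - conj A) = -2 Im A,  A = sum_{j,k} h_{j kbar} X_j conj(Y_k). *)
Definition omegaFS (p X Y : pt) : R :=
  let x1 := fst p in let x2 := snd p in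
  let N := 1 + Cmod x1 ^ 2 + Cmod x2 ^ 2 in
  let h (xj xk : C) (d : R) : C :=
    Cmult (RtoC (/ (N ^ 2))) (Cminus (RtoC (N * d)) (Cmult (Cconj xj) xk)) in
  let term (hjk Xj Yk : C) : C := Cmult hjk (Cmult Xj (Cconj Yk)) in
  let A := Cplus (Cplus (term (h x1 x1 1) (fst X) (fst Y))
                        (term (h x1 x2 0) (fst X) (snd Y)))
                 (Cplus (term (h x2 x1 0) (snd X) (fst Y))
                        (term (h x2 x2 1) (snd X) (snd Y))) in
  -2 * Im A.

Definition Ft (t : R) (p : pt) : pt :=
  let r1 := Cmod (fst p) in let r2 := Cmod (snd p) in
  (Cmult (RtoC (Rpower (Rmax 1 r2 / Rmax r1 r2) t)) (fst p),
   Cmult (RtoC (Rpower (Rmax 1 r1 / Rmax r1 r2) t)) (snd p)).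

(* Real-linear parametrization of the affine part of C_0 = {x1 + x2 + 1 = 0}
   by w = u + i v :  (x1, x2) = (-1 - w, w). *)
Definition phi0 (u v : R) : pt := ((-1 - u, - v), (u, v)).

(* (x1,x2) is not in Sing: (r1-1)(r2-1)(r1-r2) <> 0. *)
Definition nonsing (p : pt) : Prop :=
  (Cmod (fst p) - 1) * (Cmod (snd p) - 1) * (Cmod (fst p) - Cmod (snd p)) <> 0.

Definition dC (f : R -> C) (s : R) : C :=
  (Derive (fun s => fst (f s)) s, Derive (fun s => snd (f s)) s).
Definition dpt (f : R -> pt) (s : R) : pt :=
  (dC (fun s => fst (f s)) s, dC (fun s => snd (f s)) s).

(* Coefficient of Psi^* omega_FS with respect to du /\ dv at (u,v),
   for a map Psi : R^2 -> C^2:  omega_FS(dPsi(d/du), dPsi(d/dv)). *)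
Definition pullback_coeff (Psi : R -> R -> pt) (u v : R) : R :=
  omegaFS (Psi u v) (dpt (fun s => Psi s v) u) (dpt (fun s => Psi u s) v).

(* Main.v *)
Require Import Defs.
From Stdlib Require Import Reals Lra Psatz FunctionalExtensionality.
From Coquelicot Require Import Coquelicot.
Open Scope R_scope.

Definition P1 (a b : R) : R := (-1-a)^2 + (-b)^2.
Definition P2 (a b : R) : R := a^2 + b^2.
Definition Lam1 t a b := Rpower (Rmax 1 (Cmod (a,b)) / Rmax (Cmod (-1-a,-b)) (Cmod (a,b))) t.
Definition Lam2 t a b := Rpower (Rmax 1 (Cmod (-1-a,-b)) / Rmax (Cmod (-1-a,-b)) (Cmod (a,b))) t.

Lemma Ft_phi0 t a b : Ft t (phi0 a b) =
  ((Lam1 t a b * (-1-a) - 0 * (-b), Lam1 t a b * (-b) + 0*(-1-a)),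
   (Lam2 t a b * a - 0*b, Lam2 t a b * b + 0*a)).
Proof. reflexivity. Qed.

Lemma phi0_eq a b : phi0 a b =
  (((fun _ _ => 1) a b * (-1-a) - 0 * (-b), (fun _ _ => 1) a b * (-b) + 0*(-1-a)),
   ((fun _ _ => 1) a b * a - 0*b, (fun _ _ => 1) a b * b + 0*a)).
Proof. unfold phi0. f_equal; f_equal; ring. Qed.

Lemma P1_pos a b : 0 <= P1 a b. Proof. unfold P1; apply Rplus_le_le_0_compat; apply pow2_ge_0. Qed.
Lemma P2_pos a b : 0 <= P2 a b. Proof. unfold P2; apply Rplus_le_le_0_compat; apply pow2_ge_0. Qed.
Lemma P12_pos a b : 0 < Rmax (P1 a b) (P2 a b).
Proof. pose proof (Rmax_l (P1 a b) (P2 a b)). pose proof (Rmax_r (P1 a b) (P2 a b)).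
  unfold P1, P2 in *. nra. Qed.

Lemma Rmax_sqrt x y : 0 <= x -> 0 <= y -> Rmax (sqrt x) (sqrt y) = sqrt (Rmax x y).
Proof.
  intros. unfold Rmax. destruct (Rle_dec x y), (Rle_dec (sqrt x) (sqrt y)); auto.
  - exfalso. apply n. apply sqrt_le_1_alt; auto.
  - destruct (Rle_lt_dec y x). apply Rle_antisym; [|exact r]. 
    apply sqrt_le_1_alt; auto. 
    exfalso; apply n. lra.
Qed.

Lemma ln_sqrt' x : 0 < x -> ln (sqrt x) = ln x / 2.
Proof. intros. rewrite <- Rpower_sqrt by auto. rewrite ln_Rpower. field. Qed.

Lemma sqrt_Rpower X Y t : 0 < X -> 0 < Y ->
  Rpower (sqrt X / sqrt Y) t = exp (t/2*(ln X - ln Y)).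
Proof.
  intros. unfold Rpower. f_equal.
  rewrite ln_div by (apply sqrt_lt_R0; auto).
  rewrite !ln_sqrt' by auto. field.
Qed.

Lemma Lam1_eq t a b : Lam1 t a b =
  exp (t/2*(ln (Rmax 1 (P2 a b)) - ln (Rmax (P1 a b) (P2 a b)))).
Proof.
  unfold Lam1. 
  change (Cmod (a,b)) with (sqrt (P2 a b)).
  change (Cmod (-1-a,-b)) with (sqrt (P1 a b)).
  rewrite <- sqrt_1 at 1.
  rewrite !Rmax_sqrt by (try lra; apply P1_pos || apply P2_pos).
  apply sqrt_Rpower. apply Rlt_le_trans with 1; [lra| apply Rmax_l]. apply P12_pos.
Qed.

Lemma Lam2_eq t a b : Lam2 t a b =
  exp (t/2*(ln (Rmax 1 (P1 a b)) - ln (Rmax (P1 a b) (P2 a b)))).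
Proof.
  unfold Lam2. 
  change (Cmod (a,b)) with (sqrt (P2 a b)).
  change (Cmod (-1-a,-b)) with (sqrt (P1 a b)).
  rewrite <- sqrt_1 at 1.
  rewrite !Rmax_sqrt by (try lra; apply P1_pos || apply P2_pos).
  apply sqrt_Rpower. apply Rlt_le_trans with 1; [lra| apply Rmax_l]. apply P12_pos.
Qed.

Lemma loc_pos (f : R -> R) x : ex_derive f x -> 0 < f x -> locally x (fun y => 0 < f y).
Proof.
  intros Hd Hp. apply (ex_derive_continuous f x Hd (fun y => 0 < y)).
  apply open_gt. exact Hp.
Qed.

Lemma isd_max_r (f g : R -> R) x df dg : is_derive f x df -> is_derive g x dg ->
  f x < g x -> is_derive (fun s => Rmax (f s) (g s)) x dg.
Proof.
  intros Hf Hg Hlt.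
  apply is_derive_ext_loc with g; [|exact Hg].
  assert (L : locally x (fun y => 0 < g y - f y)).
  { apply loc_pos. exists (minus dg df). eapply is_derive_ext; [|apply (is_derive_minus g f x dg df Hg Hf)]; intros; reflexivity. lra. }
  revert L; apply filter_imp. intros y Hy. rewrite Rmax_right; lra.
Qed.

Lemma isd_max_l (f g : R -> R) x df dg : is_derive f x df -> is_derive g x dg ->
  g x < f x -> is_derive (fun s => Rmax (f s) (g s)) x df.
Proof.
  intros Hf Hg Hlt.
  apply is_derive_ext_loc with f; [|exact Hf].
  assert (L : locally x (fun y => 0 < f y - g y)).
  { apply loc_pos. exists (minus df dg). eapply is_derive_ext; [|apply (is_derive_minus f g x df dg Hf Hg)]; intros; reflexivity. lra. }
  revert L; apply filter_imp. intros y Hy. rewrite Rmax_left; lra.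
Qed.

Lemma isd_lam (A B : R -> R) dA dB x t : is_derive A x dA -> is_derive B x dB ->
  0 < A x -> 0 < B x ->
  is_derive (fun s => exp (t/2*(ln (A s) - ln (B s)))) x
    (exp (t/2*(ln (A x) - ln (B x))) * (t/2*(dA/A x - dB/B x))).
Proof.
  intros HA HB Ha Hb.
  assert (DA : Derive (fun y : R => A y) x = dA) by (apply is_derive_unique; exact HA).
  assert (DB : Derive (fun y : R => B y) x = dB) by (apply is_derive_unique; exact HB).
  auto_derive.
  - repeat split; auto. exists dA; exact HA. exists dB; exact HB.
  - rewrite DA, DB. unfold Rminus. field. lra.
Qed.

Lemma dP1u u v : is_derive (fun s => P1 s v) u (2*(1+u)).
Proof. unfold P1. auto_derive; auto. ring. Qed.
Lemma dP1v u v : is_derive (fun s => P1 u s) v (2*v).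
Proof. unfold P1. auto_derive; auto. ring. Qed.
Lemma dP2u u v : is_derive (fun s => P2 s v) u (2*u).
Proof. unfold P2. auto_derive; auto. ring. Qed.
Lemma dP2v u v : is_derive (fun s => P2 u s) v (2*v).
Proof. unfold P2. auto_derive; auto. ring. Qed.
Lemma dconst1 x : is_derive (fun _ : R => 1) x 0.
Proof. auto_derive; auto. Qed.

Definition om_expr (a b g1 g2 g1u g1v g2u g2v : R) : R :=
 omegaFS ((g1*(-1-a), g1*(-b)), (g2*a, g2*b))
   ((g1u*(-1-a) - g1, g1u*(-b)), (g2u*a + g2, g2u*b))
   ((g1v*(-1-a), g1v*(-b) - g1), (g2v*a, g2v*b + g2)).

Lemma pair4 (a b c d a' b' c' d' : R) : a = a' -> b = b' -> c = c' -> d = d' ->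
  (((a,b),(c,d)) : pt) = ((a',b'),(c',d')).
Proof. intros; subst; reflexivity. Qed.

Ltac dtac H g D := auto_derive; [exists g; exact H | rewrite D; ring].

Lemma pb_formula (G1 G2 : R->R->R) u v g1u g1v g2u g2v :
 is_derive (fun s => G1 s v) u g1u -> is_derive (fun s => G1 u s) v g1v ->
 is_derive (fun s => G2 s v) u g2u -> is_derive (fun s => G2 u s) v g2v ->
 pullback_coeff (fun a b => ((G1 a b * (-1-a) - 0*(-b), G1 a b * (-b) + 0*(-1-a)),
                             (G2 a b * a - 0*b, G2 a b * b + 0*a))) u v
 = om_expr u v (G1 u v) (G2 u v) g1u g1v g2u g2v.
Proof.
  intros H1 H2 H3 H4.
  assert (D1 : Derive (fun x : R => G1 x v) u = g1u) by (apply is_derive_unique; exact H1).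
  assert (D2 : Derive (fun x : R => G1 u x) v = g1v) by (apply is_derive_unique; exact H2).
  assert (D3 : Derive (fun x : R => G2 x v) u = g2u) by (apply is_derive_unique; exact H3).
  assert (D4 : Derive (fun x : R => G2 u x) v = g2v) by (apply is_derive_unique; exact H4).
  unfold pullback_coeff, dpt, dC, om_expr. cbn [fst snd].
  assert (E1: Derive (fun s => G1 s v * (-1-s) - 0*(-v)) u = g1u*(-1-u) - G1 u v)
    by (apply is_derive_unique; dtac H1 g1u D1).
  assert (E2: Derive (fun s => G1 s v * (-v) + 0*(-1-s)) u = g1u*(-v))
    by (apply is_derive_unique; dtac H1 g1u D1).
  assert (E3: Derive (fun s => G2 s v * s - 0*v) u = g2u*u + G2 u v)
    by (apply is_derive_unique; dtac H3 g2u D3).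
  assert (E4: Derive (fun s => G2 s v * v + 0*s) u = g2u*v)
    by (apply is_derive_unique; dtac H3 g2u D3).
  assert (E5: Derive (fun s => G1 u s * (-1-u) - 0*(-s)) v = g1v*(-1-u))
    by (apply is_derive_unique; dtac H2 g1v D2).
  assert (E6: Derive (fun s => G1 u s * (-s) + 0*(-1-u)) v = g1v*(-v) - G1 u v)
    by (apply is_derive_unique; dtac H2 g1v D2).
  assert (E7: Derive (fun s => G2 u s * u - 0*s) v = g2v*u)
    by (apply is_derive_unique; dtac H4 g2v D4).
  assert (E8: Derive (fun s => G2 u s * s + 0*u) v = g2v*v + G2 u v)
    by (apply is_derive_unique; dtac H4 g2v D4).
  rewrite E1, E2, E3, E4, E5, E6, E7, E8.
  f_equal; apply pair4; ring.
Qed.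

Lemma Cmod_sq (z : C) : Cmod z ^ 2 = fst z ^ 2 + snd z ^ 2.
Proof. unfold Cmod. rewrite pow2_sqrt; [reflexivity|]. destruct z; simpl; nra. Qed.

Ltac omtac := unfold om_expr, omegaFS; rewrite !Cmod_sq; cbn [fst snd];
  unfold Cmult, Cminus, Cplus, Copp, Cconj, RtoC, Im; cbn [fst snd];
  unfold P1, P2 in *.

Lemma base_alg u v : om_expr u v 1 1 0 0 0 0 = 6 / (1 + P1 u v + P2 u v)^2.
Proof. omtac. field. nra. Qed.

Lemma R1_alg u v t g g1u g1v g2u g2v : 0 < g -> 1 < P2 u v -> P2 u v < P1 u v ->
  g1u = g*(t/2*(2*u/P2 u v - 2*(1+u)/P1 u v)) -> g1v = g*(t/2*(2*v/P2 u v - 2*v/P1 u v)) ->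
  g2u = 0 -> g2v = 0 ->
  om_expr u v g 1 g1u g1v g2u g2v = 2 / (1 + g*g*P1 u v + P2 u v)^2 *
     (1 + 2*(g*g)*(1-t) + t*(g*g)*(P1 u v + P2 u v - 1)/(2*P2 u v)).
Proof. intros; subst. omtac. field. repeat split; nra. Qed.

Lemma R2_alg u v t g g1u g1v g2u g2v : 0 < g -> 1 < P1 u v -> P1 u v < P2 u v ->
  g2u = g*(t/2*(2*(1+u)/P1 u v - 2*u/P2 u v)) -> g2v = g*(t/2*(2*v/P1 u v - 2*v/P2 u v)) ->
  g1u = 0 -> g1v = 0 ->
  om_expr u v 1 g g1u g1v g2u g2v = 2 / (1 + g*g*P2 u v + P1 u v)^2 *
     (1 + 2*(g*g)*(1-t) + t*(g*g)*(P2 u v + P1 u v - 1)/(2*P1 u v)).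
Proof. intros; subst. omtac. field. repeat split; nra. Qed.

Lemma R3_alg u v t g g1u g1v g2u g2v : 0 < g -> 1 < P1 u v -> P2 u v < 1 -> 0 < P2 u v ->
  g1u = g*(t/2*(0/1 - 2*(1+u)/P1 u v)) -> g1v = g*(t/2*(0/1 - 2*v/P1 u v)) ->
  g2u = 0 -> g2v = 0 ->
  om_expr u v g 1 g1u g1v g2u g2v = 2 / (1 + g*g*P1 u v + P2 u v)^2 *
     (1 + (g*g)*(2 - 3*t/2 + t*(P1 u v - P2 u v)/2)).
Proof. intros; subst. omtac. field. repeat split; nra. Qed.

Lemma R4_alg u v t g g1u g1v g2u g2v : 0 < g -> 1 < P2 u v -> P1 u v < 1 -> 0 < P1 u v ->
  g2u = g*(t/2*(0/1 - 2*u/P2 u v)) -> g2v = g*(t/2*(0/1 - 2*v/P2 u v)) ->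
  g1u = 0 -> g1v = 0 ->
  om_expr u v 1 g g1u g1v g2u g2v = 2 / (1 + g*g*P2 u v + P1 u v)^2 *
     (1 + (g*g)*(2 - 3*t/2 + t*(P2 u v - P1 u v)/2)).
Proof. intros; subst. omtac. field. repeat split; nra. Qed.

Lemma R5_alg u v t g g1u g1v : 0 < g -> P2 u v < P1 u v -> 0 < P2 u v ->
  g1u = g*(t/2*(0/1 - 2*(1+u)/P1 u v)) -> g1v = g*(t/2*(0/1 - 2*v/P1 u v)) ->
  om_expr u v g g g1u g1v g1u g1v = 2*(g*g) / (1 + g*g*(P1 u v + P2 u v))^2 *
     (2 + g*g - 2*t + t*(1+u)/P1 u v).
Proof. intros; subst. omtac. field. repeat split; nra. Qed.

Lemma R6_alg u v t g g1u g1v : 0 < g -> P1 u v < P2 u v -> 0 < P1 u v ->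
  g1u = g*(t/2*(0/1 - 2*u/P2 u v)) -> g1v = g*(t/2*(0/1 - 2*v/P2 u v)) ->
  om_expr u v g g g1u g1v g1u g1v = 2*(g*g) / (1 + g*g*(P2 u v + P1 u v))^2 *
     (2 + g*g - 2*t + t*(1+(-1-u))/P2 u v).
Proof. intros; subst. omtac. field. repeat split; nra. Qed.

Lemma final_bounds N N0 K W0 : W0 = 6/N0^2 -> 0 < N -> 0 < N0 ->
  (6/100)*(N*N) <= K*(N0*N0) -> K*(N0*N0) <= 600*(N*N) ->
  /100*W0 <= K/N^2 <= 100*W0.
Proof.
  intros -> HN HN0 H1 H2. split.
  - replace (/100*(6/N0^2)) with ((6/100)/(N0*N0)) by (field; lra).
    unfold Rdiv. apply Rle_trans with (K/(N*N)).
    + apply Rmult_le_reg_r with ((N0*N0)*(N*N)). apply Rmult_lt_0_compat; apply Rmult_lt_0_compat; lra.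
      replace (6 * / 100 * / (N0 * N0) * (N0 * N0 * (N * N))) with (6/100*(N*N)) by (field; lra).
      replace (K / (N * N) * (N0 * N0 * (N * N))) with (K*(N0*N0)) by (field; lra). lra.
    + right. unfold Rdiv. f_equal. f_equal. ring.
  - replace (100*(6/N0^2)) with (600/(N0*N0)) by (field; lra).
    replace (K/N^2) with (K/(N*N)) by (field; lra).
    apply Rmult_le_reg_r with ((N0*N0)*(N*N)). apply Rmult_lt_0_compat; apply Rmult_lt_0_compat; lra.
    replace (K / (N * N) * (N0 * N0 * (N * N))) with (K*(N0*N0)) by (field; lra).
    replace (600 / (N0 * N0) * (N0 * N0 * (N * N))) with (600*(N*N)) by (field; lra). lra.
Qed.

Lemma R1_ineq p1 p2 u t G W0 : W0 = 6/(1+p1+p2)^2 -> p1 = p2+2*u+1 -> u*u <= p2 ->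
  1 < p2 -> p2 < p1 -> 0 <= t <= 1 -> p2/p1 <= G -> G <= 1 ->
  /100*W0 <= 2/(1+G*p1+p2)^2 * (1 + 2*G*(1-t) + t*G*(p1+p2-1)/(2*p2)) <= 100*W0.
Proof.
  intros HW hp hu h2 h12 ht hG1 hG2.
  assert (Gp : p2 <= G*p1).
  { apply Rmult_le_compat_r with (r:=p1) in hG1; [|lra].
    replace (p2/p1*p1) with p2 in hG1 by (field; lra). lra. }
  assert (p14 : p1 <= 4*p2) by (pose proof (pow2_ge_0 (u-1)); nra).
  set (q := (p1+p2-1)/(2*p2)).
  assert (Hq : q*(2*p2) = p1+p2-1) by (unfold q; field; lra).
  assert (q0 : 0 <= q) by nra.
  assert (q5 : q <= 5/2) by nra.
  assert (G0 : 0 < G) by nra.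
  assert (tG0 : 0 <= t*G) by (apply Rmult_le_pos; lra).
  assert (tG1 : t*G <= 1) by nra.
  assert (tGq0 : 0 <= t*G*q) by (apply Rmult_le_pos; lra).
  assert (tGq1 : t*G*q <= 5/2) by nra.
  set (B := 1 + 2*G*(1-t) + t*G*q).
  assert (B1 : 1 <= B) by (unfold B; nra).
  assert (B6 : B <= 6) by (unfold B; nra).
  replace (2/(1+G*p1+p2)^2 * (1 + 2*G*(1-t) + t*G*(p1+p2-1)/(2*p2)))
    with ((2*B)/(1+G*p1+p2)^2) by (unfold B, q; field; nra).
  set (N := 1+G*p1+p2). set (N0 := 1+p1+p2).
  assert (N1 : 0 < N) by (unfold N; nra).
  assert (N2 : N <= N0) by (unfold N, N0; nra).
  assert (N3 : N0 <= 3*N) by (unfold N, N0; nra).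
  assert (M1 : N*N <= N0*N0) by nra.
  assert (M2 : N0*N0 <= 9*(N*N)) by nra.
  assert (M3 : 0 <= N*N) by nra.
  apply (final_bounds _ N0); try (unfold N0; nra); nra.
Qed.

Lemma R3_ineq p1 p2 u t G W0 : W0 = 6/(1+p1+p2)^2 -> p1 = p2+2*u+1 -> u*u <= p2 ->
  1 < p1 -> p2 < 1 -> 0 <= t <= 1 -> 0 <= G -> G <= 1 ->
  /100*W0 <= 2/(1+G*p1+p2)^2 * (1 + G*(2 - 3*t/2 + t*(p1-p2)/2)) <= 100*W0.
Proof.
  intros HW hp hu h1 h2 ht hG1 hG2.
  assert (p14 : p1 < 4) by (pose proof (pow2_ge_0 (u-1)); nra).
  assert (p20 : 0 <= p2) by nra.
  set (B := 1 + G*(2 - 3*t/2 + t*(p1-p2)/2)).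
  assert (tG0 : 0 <= t*G) by (apply Rmult_le_pos; lra).
  assert (tG1 : t*G <= 1) by nra.
  assert (B1 : 1 <= B) by (unfold B; nra).
  assert (B6 : B <= 5) by (unfold B; nra).
  replace (2/(1+G*p1+p2)^2 * B) with ((2*B)/(1+G*p1+p2)^2) by (field; nra).
  set (N := 1+G*p1+p2). set (N0 := 1+p1+p2).
  assert (N1 : 1 <= N) by (unfold N; nra).
  assert (N2 : N <= N0) by (unfold N, N0; nra).
  assert (N3 : N0 <= 6) by (unfold N0; nra).
  assert (M1 : N*N <= N0*N0) by nra.
  assert (M2 : N0*N0 <= 36) by nra.
  assert (M3 : 1 <= N*N) by nra.
  apply (final_bounds _ N0); try (unfold N0; nra); nra.
Qed.

Lemma R5_ineq p1 p2 u t G W0 : W0 = 6/(1+p1+p2)^2 -> p1 = p2+2*u+1 -> u*u <= p2 ->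
  p1 < 1 -> p2 < p1 -> 0 <= t <= 1 -> 1 <= G -> G*p1 <= 1 ->
  /100*W0 <= 2*G/(1+G*(p1+p2))^2 * (2 + G - 2*t + t*(1+u)/p1) <= 100*W0.
Proof.
  intros HW hp hu h1 h2 ht hG1 hG2.
  assert (p20 : 0 <= p2) by nra.
  assert (u1 : 0 < 1+u) by nra.
  assert (u2 : (1+u)*(1+u) <= p1) by nra.
  assert (u3 : 1+u <= 1) by nra.
  assert (p14 : 1/4 < p1) by nra.
  assert (G4 : G <= 4) by nra.
  set (r := (1+u)/p1).
  assert (Hr : r*p1 = 1+u) by (unfold r; field; lra).
  assert (r0 : 0 <= r) by nra.
  assert (r4 : r <= 4) by nra.
  set (B := 2 + G - 2*t + t*r).
  assert (B1 : G <= B) by (unfold B; nra).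
  assert (B6 : B <= 10) by (unfold B; nra).
  replace (2*G/(1+G*(p1+p2))^2 * (2 + G - 2*t + t*(1+u)/p1))
    with ((2*G*B)/(1+G*(p1+p2))^2) by (unfold B, r; field; nra).
  assert (N1 : 1+G*(p1+p2) <= G*(1+p1+p2)) by nra.
  assert (N2 : 1+p1+p2 <= 1+G*(p1+p2)) by nra.
  set (N := 1+G*(p1+p2)) in *. set (N0 := 1+p1+p2) in *.
  assert (N0p : 0 < N0) by (unfold N0; lra).
  assert (GB1 : G*G <= G*B) by nra.
  assert (GB2 : G*B <= 40) by nra.
  assert (M1 : N*N <= (G*G)*(N0*N0)) by nra.
  assert (M2 : (G*G)*(N0*N0) <= (G*B)*(N0*N0)) by (apply Rmult_le_compat_r; nra).
  assert (M3 : N0*N0 <= N*N) by nra.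
  assert (M4 : (G*B)*(N0*N0) <= 40*(N0*N0)) by (apply Rmult_le_compat_r; nra).
  apply (final_bounds _ N0); try (unfold N0; nra); nra.
Qed.

Lemma pb_formula' (Psi : R -> R -> pt) (G1 G2 : R->R->R) u v g1u g1v g2u g2v :
 (forall a b, Psi a b = ((G1 a b * (-1-a) - 0*(-b), G1 a b * (-b) + 0*(-1-a)),
                             (G2 a b * a - 0*b, G2 a b * b + 0*a))) ->
 is_derive (fun s => G1 s v) u g1u -> is_derive (fun s => G1 u s) v g1v ->
 is_derive (fun s => G2 s v) u g2u -> is_derive (fun s => G2 u s) v g2v ->
 pullback_coeff Psi u v = om_expr u v (G1 u v) (G2 u v) g1u g1v g2u g2v.
Proof.
  intros HP. 
  replace Psi with (fun a b => ((G1 a b * (-1-a) - 0*(-b), G1 a b * (-b) + 0*(-1-a)),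
                             (G2 a b * a - 0*b, G2 a b * b + 0*a))).
  apply pb_formula.
  extensionality a. extensionality b. symmetry. apply HP.
Qed.

Lemma pb0 u v : pullback_coeff phi0 u v = 6/(1+P1 u v+P2 u v)^2.
Proof.
  rewrite (pb_formula' phi0 (fun _ _ => 1) (fun _ _ => 1) u v 0 0 0 0 (phi0_eq) (dconst1 u) (dconst1 v) (dconst1 u) (dconst1 v)).
  apply base_alg.
Qed.

Lemma pbFt t u v dA1u dA1v dA2u dA2v dBu dBv :
 is_derive (fun s => Rmax 1 (P2 s v)) u dA1u -> is_derive (fun s => Rmax 1 (P2 u s)) v dA1v ->
 is_derive (fun s => Rmax 1 (P1 s v)) u dA2u -> is_derive (fun s => Rmax 1 (P1 u s)) v dA2v ->
 is_derive (fun s => Rmax (P1 s v) (P2 s v)) u dBu -> is_derive (fun s => Rmax (P1 u s) (P2 u s)) v dBv ->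
 pullback_coeff (fun a b => Ft t (phi0 a b)) u v = om_expr u v (Lam1 t u v) (Lam2 t u v)
   (Lam1 t u v * (t/2*(dA1u/Rmax 1 (P2 u v) - dBu/Rmax (P1 u v) (P2 u v))))
   (Lam1 t u v * (t/2*(dA1v/Rmax 1 (P2 u v) - dBv/Rmax (P1 u v) (P2 u v))))
   (Lam2 t u v * (t/2*(dA2u/Rmax 1 (P1 u v) - dBu/Rmax (P1 u v) (P2 u v))))
   (Lam2 t u v * (t/2*(dA2v/Rmax 1 (P1 u v) - dBv/Rmax (P1 u v) (P2 u v)))).
Proof.
  intros H1 H2 H3 H4 H5 H6.
  assert (M1 : forall a b, 0 < Rmax 1 (P2 a b)) by (intros; apply Rlt_le_trans with 1; [lra|apply Rmax_l]).
  assert (M2 : forall a b, 0 < Rmax 1 (P1 a b)) by (intros; apply Rlt_le_trans with 1; [lra|apply Rmax_l]).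
  apply pb_formula'.
  - intros; apply Ft_phi0.
  - rewrite (Lam1_eq t u v). apply is_derive_ext with (fun s => exp (t/2*(ln (Rmax 1 (P2 s v)) - ln (Rmax (P1 s v) (P2 s v))))).
    { intros; symmetry; apply Lam1_eq. }
    apply (isd_lam (fun s => Rmax 1 (P2 s v)) (fun s => Rmax (P1 s v) (P2 s v))); auto. apply P12_pos.
  - rewrite (Lam1_eq t u v). apply is_derive_ext with (fun s => exp (t/2*(ln (Rmax 1 (P2 u s)) - ln (Rmax (P1 u s) (P2 u s))))).
    { intros; symmetry; apply Lam1_eq. }
    apply (isd_lam (fun s => Rmax 1 (P2 u s)) (fun s => Rmax (P1 u s) (P2 u s))); auto. apply P12_pos.
  - rewrite (Lam2_eq t u v). apply is_derive_ext with (fun s => exp (t/2*(ln (Rmax 1 (P1 s v)) - ln (Rmax (P1 s v) (P2 s v))))).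
    { intros; symmetry; apply Lam2_eq. }
    apply (isd_lam (fun s => Rmax 1 (P1 s v)) (fun s => Rmax (P1 s v) (P2 s v))); auto. apply P12_pos.
  - rewrite (Lam2_eq t u v). apply is_derive_ext with (fun s => exp (t/2*(ln (Rmax 1 (P1 u s)) - ln (Rmax (P1 u s) (P2 u s))))).
    { intros; symmetry; apply Lam2_eq. }
    apply (isd_lam (fun s => Rmax 1 (P1 u s)) (fun s => Rmax (P1 u s) (P2 u s))); auto. apply P12_pos.
Qed.

Lemma exp_le x y : x <= y -> exp x <= exp y.
Proof. intros [H|H]. left; apply exp_increasing; auto. subst; lra. Qed.

Lemma exp_sq t L : exp (t/2*L) * exp (t/2*L) = exp (t*L).
Proof. rewrite <- exp_plus. f_equal. field. Qed.

Lemma G_neg t L : 0 <= t <= 1 -> L <= 0 -> exp L <= exp (t/2*L) * exp (t/2*L) <= 1.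
Proof. intros. rewrite exp_sq. rewrite <- exp_0. split; apply exp_le; nra. Qed.

Lemma G_pos t L : 0 <= t <= 1 -> 0 <= L -> 1 <= exp (t/2*L) * exp (t/2*L) <= exp L.
Proof. intros. rewrite exp_sq. rewrite <- exp_0. split; apply exp_le; nra. Qed.

Lemma exp_lnd a b : 0 < a -> 0 < b -> exp (ln a - ln b) = a / b.
Proof. intros. unfold Rminus. rewrite exp_plus, exp_Ropp, !exp_ln; auto. Qed.

Lemma P1P2 u v : P1 u v = P2 u v + 2*u + 1.
Proof. unfold P1, P2. ring. Qed.
Lemma usq u v : u*u <= P2 u v.
Proof. unfold P2. pose proof (pow2_ge_0 v). nra. Qed.
Lemma P2P1 u v : P2 u v = P1 u v + 2*(-1-u) + 1.
Proof. unfold P1, P2. ring. Qed.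
Lemma usq' u v : (-1-u)*(-1-u) <= P1 u v.
Proof. unfold P1. pose proof (pow2_ge_0 (-v)). nra. Qed.

Definition Bnd (t u v : R) : Prop :=
  /100 * pullback_coeff phi0 u v <= pullback_coeff (fun a b => Ft t (phi0 a b)) u v
    <= 100 * pullback_coeff phi0 u v.

Lemma W0swap u v : 6/(1+P1 u v+P2 u v)^2 = 6/(1+P2 u v+P1 u v)^2.
Proof. replace (1+P2 u v+P1 u v) with (1+P1 u v+P2 u v) by ring. reflexivity. Qed.

Lemma caseR1 t u v : 0<=t<=1 -> 1 < P2 u v -> P2 u v < P1 u v -> Bnd t u v.
Proof.
  intros ht h2 h12. unfold Bnd.
  assert (h1: 1 < P1 u v) by lra.
  rewrite pb0.
  rewrite (pbFt t u v (2*u) (2*v) (2*(1+u)) (2*v) (2*(1+u)) (2*v)).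
  2: apply (isd_max_r (fun _ => 1) (fun s => P2 s v) u 0 (2*u)); [apply dconst1|apply dP2u|exact h2].
  2: apply (isd_max_r (fun _ => 1) (fun s => P2 u s) v 0 (2*v)); [apply dconst1|apply dP2v|exact h2].
  2: apply (isd_max_r (fun _ => 1) (fun s => P1 s v) u 0 (2*(1+u))); [apply dconst1|apply dP1u|exact h1].
  2: apply (isd_max_r (fun _ => 1) (fun s => P1 u s) v 0 (2*v)); [apply dconst1|apply dP1v|exact h1].
  2: apply (isd_max_l (fun s => P1 s v) (fun s => P2 s v) u (2*(1+u)) (2*u)); [apply dP1u|apply dP2u|exact h12].
  2: apply (isd_max_l (fun s => P1 u s) (fun s => P2 u s) v (2*v) (2*v)); [apply dP1v|apply dP2v|exact h12].
  rewrite Lam1_eq, Lam2_eq.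
  rewrite (Rmax_right 1 (P2 u v)) by lra. rewrite (Rmax_right 1 (P1 u v)) by lra.
  rewrite (Rmax_left (P1 u v) (P2 u v)) by lra.
  replace (ln (P1 u v) - ln (P1 u v)) with 0 by ring. rewrite Rmult_0_r, exp_0.
  set (L := ln (P2 u v) - ln (P1 u v)).
  set (g := exp (t/2*L)).
  erewrite R1_alg with (g:=g); [ | unfold g; apply exp_pos | lra | lra | reflexivity | reflexivity | field; lra | field; lra ].
  assert (HL : L <= 0) by (unfold L; pose proof (ln_increasing (P2 u v) (P1 u v)); lra).
  destruct (G_neg t L ht HL) as [Ga Gb]. fold g in Ga, Gb.
  unfold L in Ga at 1. rewrite exp_lnd in Ga by lra.
  apply (R1_ineq (P1 u v) (P2 u v) u t (g*g)); auto using P1P2, usq.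
Qed.

Lemma caseR2 t u v : 0<=t<=1 -> 1 < P1 u v -> P1 u v < P2 u v -> Bnd t u v.
Proof.
  intros ht h1 h12. unfold Bnd.
  assert (h2: 1 < P2 u v) by lra.
  rewrite pb0.
  rewrite (pbFt t u v (2*u) (2*v) (2*(1+u)) (2*v) (2*u) (2*v)).
  2: apply (isd_max_r (fun _ => 1) (fun s => P2 s v) u 0 (2*u)); [apply dconst1|apply dP2u|exact h2].
  2: apply (isd_max_r (fun _ => 1) (fun s => P2 u s) v 0 (2*v)); [apply dconst1|apply dP2v|exact h2].
  2: apply (isd_max_r (fun _ => 1) (fun s => P1 s v) u 0 (2*(1+u))); [apply dconst1|apply dP1u|exact h1].
  2: apply (isd_max_r (fun _ => 1) (fun s => P1 u s) v 0 (2*v)); [apply dconst1|apply dP1v|exact h1].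
  2: apply (isd_max_r (fun s => P1 s v) (fun s => P2 s v) u (2*(1+u)) (2*u)); [apply dP1u|apply dP2u|exact h12].
  2: apply (isd_max_r (fun s => P1 u s) (fun s => P2 u s) v (2*v) (2*v)); [apply dP1v|apply dP2v|exact h12].
  rewrite Lam1_eq, Lam2_eq.
  rewrite (Rmax_right 1 (P2 u v)) by lra. rewrite (Rmax_right 1 (P1 u v)) by lra.
  rewrite (Rmax_right (P1 u v) (P2 u v)) by lra.
  replace (ln (P2 u v) - ln (P2 u v)) with 0 by ring. rewrite Rmult_0_r, exp_0.
  set (L := ln (P1 u v) - ln (P2 u v)).
  set (g := exp (t/2*L)).
  erewrite R2_alg with (g:=g); [ | unfold g; apply exp_pos | lra | lra | reflexivity | reflexivity | field; lra | field; lra ].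
  assert (HL : L <= 0) by (unfold L; pose proof (ln_increasing (P1 u v) (P2 u v)); lra).
  destruct (G_neg t L ht HL) as [Ga Gb]. fold g in Ga, Gb.
  unfold L in Ga at 1. rewrite exp_lnd in Ga by lra.
  apply (R1_ineq (P2 u v) (P1 u v) (-1-u) t (g*g)); auto using P2P1, usq', W0swap.
Qed.

Lemma caseR3 t u v : 0<=t<=1 -> 1 < P1 u v -> P2 u v < 1 -> Bnd t u v.
Proof.
  intros ht h1 h2. unfold Bnd.
  assert (h12: P2 u v < P1 u v) by lra.
  assert (h20: 0 < P2 u v) by (pose proof (P1P2 u v); pose proof (usq u v); nra).
  rewrite pb0.
  rewrite (pbFt t u v 0 0 (2*(1+u)) (2*v) (2*(1+u)) (2*v)).
  2: apply (isd_max_l (fun _ => 1) (fun s => P2 s v) u 0 (2*u)); [apply dconst1|apply dP2u|exact h2].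
  2: apply (isd_max_l (fun _ => 1) (fun s => P2 u s) v 0 (2*v)); [apply dconst1|apply dP2v|exact h2].
  2: apply (isd_max_r (fun _ => 1) (fun s => P1 s v) u 0 (2*(1+u))); [apply dconst1|apply dP1u|exact h1].
  2: apply (isd_max_r (fun _ => 1) (fun s => P1 u s) v 0 (2*v)); [apply dconst1|apply dP1v|exact h1].
  2: apply (isd_max_l (fun s => P1 s v) (fun s => P2 s v) u (2*(1+u)) (2*u)); [apply dP1u|apply dP2u|exact h12].
  2: apply (isd_max_l (fun s => P1 u s) (fun s => P2 u s) v (2*v) (2*v)); [apply dP1v|apply dP2v|exact h12].
  rewrite Lam1_eq, Lam2_eq.
  rewrite (Rmax_left 1 (P2 u v)) by lra. rewrite (Rmax_right 1 (P1 u v)) by lra.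
  rewrite (Rmax_left (P1 u v) (P2 u v)) by lra.
  replace (ln (P1 u v) - ln (P1 u v)) with 0 by ring. rewrite Rmult_0_r, exp_0.
  set (L := ln 1 - ln (P1 u v)).
  set (g := exp (t/2*L)).
  erewrite R3_alg with (g:=g); [ | unfold g; apply exp_pos | lra | lra | lra | reflexivity | reflexivity | field; lra | field; lra ].
  assert (HL : L <= 0) by (unfold L; pose proof (ln_increasing 1 (P1 u v)); lra).
  destruct (G_neg t L ht HL) as [Ga Gb]. fold g in Ga, Gb.
  pose proof (exp_pos L).
  apply (R3_ineq (P1 u v) (P2 u v) u t (g*g)); auto using P1P2, usq; lra.
Qed.

Lemma caseR4 t u v : 0<=t<=1 -> 1 < P2 u v -> P1 u v < 1 -> Bnd t u v.
Proof.
  intros ht h2 h1. unfold Bnd.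
  assert (h12: P1 u v < P2 u v) by lra.
  assert (h10: 0 < P1 u v) by (pose proof (P2P1 u v); pose proof (usq' u v); nra).
  rewrite pb0.
  rewrite (pbFt t u v (2*u) (2*v) 0 0 (2*u) (2*v)).
  2: apply (isd_max_r (fun _ => 1) (fun s => P2 s v) u 0 (2*u)); [apply dconst1|apply dP2u|exact h2].
  2: apply (isd_max_r (fun _ => 1) (fun s => P2 u s) v 0 (2*v)); [apply dconst1|apply dP2v|exact h2].
  2: apply (isd_max_l (fun _ => 1) (fun s => P1 s v) u 0 (2*(1+u))); [apply dconst1|apply dP1u|exact h1].
  2: apply (isd_max_l (fun _ => 1) (fun s => P1 u s) v 0 (2*v)); [apply dconst1|apply dP1v|exact h1].
  2: apply (isd_max_r (fun s => P1 s v) (fun s => P2 s v) u (2*(1+u)) (2*u)); [apply dP1u|apply dP2u|exact h12].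
  2: apply (isd_max_r (fun s => P1 u s) (fun s => P2 u s) v (2*v) (2*v)); [apply dP1v|apply dP2v|exact h12].
  rewrite Lam1_eq, Lam2_eq.
  rewrite (Rmax_right 1 (P2 u v)) by lra. rewrite (Rmax_left 1 (P1 u v)) by lra.
  rewrite (Rmax_right (P1 u v) (P2 u v)) by lra.
  replace (ln (P2 u v) - ln (P2 u v)) with 0 by ring. rewrite Rmult_0_r, exp_0.
  set (L := ln 1 - ln (P2 u v)).
  set (g := exp (t/2*L)).
  erewrite R4_alg with (g:=g); [ | unfold g; apply exp_pos | lra | lra | lra | reflexivity | reflexivity | field; lra | field; lra ].
  assert (HL : L <= 0) by (unfold L; pose proof (ln_increasing 1 (P2 u v)); lra).
  destruct (G_neg t L ht HL) as [Ga Gb]. fold g in Ga, Gb.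
  pose proof (exp_pos L).
  apply (R3_ineq (P2 u v) (P1 u v) (-1-u) t (g*g)); auto using P2P1, usq', W0swap; lra.
Qed.

Lemma caseR5 t u v : 0<=t<=1 -> P1 u v < 1 -> P2 u v < P1 u v -> Bnd t u v.
Proof.
  intros ht h1 h12. unfold Bnd.
  assert (h2: P2 u v < 1) by lra.
  assert (h20: 0 < P2 u v) by (pose proof (P1P2 u v); pose proof (usq u v); nra).
  rewrite pb0.
  rewrite (pbFt t u v 0 0 0 0 (2*(1+u)) (2*v)).
  2: apply (isd_max_l (fun _ => 1) (fun s => P2 s v) u 0 (2*u)); [apply dconst1|apply dP2u|exact h2].
  2: apply (isd_max_l (fun _ => 1) (fun s => P2 u s) v 0 (2*v)); [apply dconst1|apply dP2v|exact h2].
  2: apply (isd_max_l (fun _ => 1) (fun s => P1 s v) u 0 (2*(1+u))); [apply dconst1|apply dP1u|exact h1].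
  2: apply (isd_max_l (fun _ => 1) (fun s => P1 u s) v 0 (2*v)); [apply dconst1|apply dP1v|exact h1].
  2: apply (isd_max_l (fun s => P1 s v) (fun s => P2 s v) u (2*(1+u)) (2*u)); [apply dP1u|apply dP2u|exact h12].
  2: apply (isd_max_l (fun s => P1 u s) (fun s => P2 u s) v (2*v) (2*v)); [apply dP1v|apply dP2v|exact h12].
  rewrite Lam1_eq, Lam2_eq.
  rewrite (Rmax_left 1 (P2 u v)) by lra. rewrite (Rmax_left 1 (P1 u v)) by lra.
  rewrite (Rmax_left (P1 u v) (P2 u v)) by lra.
  set (L := ln 1 - ln (P1 u v)).
  set (g := exp (t/2*L)).
  erewrite R5_alg with (g:=g); [ | unfold g; apply exp_pos | lra | lra | reflexivity | reflexivity ].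
  assert (HL : 0 <= L) by (unfold L; pose proof (ln_increasing (P1 u v) 1); lra).
  destruct (G_pos t L ht HL) as [Ga Gb]. fold g in Ga, Gb.
  unfold L in Gb at 1. rewrite exp_lnd in Gb by lra.
  apply (R5_ineq (P1 u v) (P2 u v) u t (g*g)); auto using P1P2, usq.
  apply Rmult_le_compat_r with (r := P1 u v) in Gb; [|lra].
  replace (1 / P1 u v * P1 u v) with 1 in Gb by (field; lra). lra.
Qed.

Lemma caseR6 t u v : 0<=t<=1 -> P2 u v < 1 -> P1 u v < P2 u v -> Bnd t u v.
Proof.
  intros ht h2 h12. unfold Bnd.
  assert (h1: P1 u v < 1) by lra.
  assert (h10: 0 < P1 u v) by (pose proof (P2P1 u v); pose proof (usq' u v); nra).
  rewrite pb0.
  rewrite (pbFt t u v 0 0 0 0 (2*u) (2*v)).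
  2: apply (isd_max_l (fun _ => 1) (fun s => P2 s v) u 0 (2*u)); [apply dconst1|apply dP2u|exact h2].
  2: apply (isd_max_l (fun _ => 1) (fun s => P2 u s) v 0 (2*v)); [apply dconst1|apply dP2v|exact h2].
  2: apply (isd_max_l (fun _ => 1) (fun s => P1 s v) u 0 (2*(1+u))); [apply dconst1|apply dP1u|exact h1].
  2: apply (isd_max_l (fun _ => 1) (fun s => P1 u s) v 0 (2*v)); [apply dconst1|apply dP1v|exact h1].
  2: apply (isd_max_r (fun s => P1 s v) (fun s => P2 s v) u (2*(1+u)) (2*u)); [apply dP1u|apply dP2u|exact h12].
  2: apply (isd_max_r (fun s => P1 u s) (fun s => P2 u s) v (2*v) (2*v)); [apply dP1v|apply dP2v|exact h12].
  rewrite Lam1_eq, Lam2_eq.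
  rewrite (Rmax_left 1 (P2 u v)) by lra. rewrite (Rmax_left 1 (P1 u v)) by lra.
  rewrite (Rmax_right (P1 u v) (P2 u v)) by lra.
  set (L := ln 1 - ln (P2 u v)).
  set (g := exp (t/2*L)).
  erewrite R6_alg with (g:=g); [ | unfold g; apply exp_pos | lra | lra | reflexivity | reflexivity ].
  assert (HL : 0 <= L) by (unfold L; pose proof (ln_increasing (P2 u v) 1); lra).
  destruct (G_pos t L ht HL) as [Ga Gb]. fold g in Ga, Gb.
  unfold L in Gb at 1. rewrite exp_lnd in Gb by lra.
  apply (R5_ineq (P2 u v) (P1 u v) (-1-u) t (g*g)); auto using P2P1, usq', W0swap.
  apply Rmult_le_compat_r with (r := P2 u v) in Gb; [|lra].
  replace (1 / P2 u v * P2 u v) with 1 in Gb by (field; lra). lra.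
Qed.

Lemma key t u v : 0 <= t <= 1 -> nonsing (phi0 u v) -> Bnd t u v.
Proof.
  intros ht Hn. unfold nonsing in Hn.
  change (Cmod (fst (phi0 u v))) with (sqrt (P1 u v)) in Hn.
  change (Cmod (snd (phi0 u v))) with (sqrt (P2 u v)) in Hn.
  assert (n1 : P1 u v <> 1).
  { intro E. apply Hn. rewrite E, sqrt_1. ring. }
  assert (n2 : P2 u v <> 1).
  { intro E. apply Hn. rewrite E, sqrt_1. ring. }
  assert (n12 : P1 u v <> P2 u v).
  { intro E. apply Hn. rewrite E. ring. }
  destruct (Rtotal_order (P1 u v) 1) as [a1|[a1|a1]]; [|contradiction|];
  destruct (Rtotal_order (P2 u v) 1) as [a2|[a2|a2]]; try contradiction;
  destruct (Rtotal_order (P1 u v) (P2 u v)) as [a3|[a3|a3]]; try contradiction.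
  - apply caseR6; auto.
  - apply caseR5; auto.
  - apply caseR4; auto.
  - lra.
  - lra.
  - apply caseR3; auto.
  - apply caseR2; auto.
  - apply caseR1; auto.
Qed.

Theorem lemma4p1 :
  exists c : R, 1 < c /\
    (forall t u v : R, 0 <= t <= 1 -> nonsing (phi0 u v) ->
       / c * pullback_coeff phi0 u v
         <= pullback_coeff (fun a b => Ft t (phi0 a b)) u v
         <= c * pullback_coeff phi0 u v) /\
    (forall t u v : R, 0 <= t <= 1 -> nonsing (phi0 u v) ->
       pullback_coeff (fun a b => Ft t (phi0 a b)) u v <> 0).
Proof.
  exists 100. split; [lra|]. split.
  - intros. apply key; auto.
  - intros t u v ht Hn. destruct (key t u v ht Hn) as [H _].
    assert (W : 0 < pullback_coeff phi0 u v).
    { rewrite pb0. apply Rdiv_lt_0_compat; [lra|].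
      pose proof (P1_pos u v); pose proof (P2_pos u v). apply pow_lt. lra. }
    assert (0 < / 100 * pullback_coeff phi0 u v) by (apply Rmult_lt_0_compat; lra).
    lra.
Qed.
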